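(* Let $f:\mathcal{P}_2(H)\to U$ and $X_0\in L^2(\Omega,H)$ with $\mu_0=\mathcal{L}(X_0)=\sum_{k=1}^Np_k\delta_{x_k}$, $x_1,\dots,x_N\in H$ distinct, $p_k>0$, $\sum_kp_k=1$. Assume the lift $\hat f(X)=f(\mathcal{L}(X))$ is Fréchet differentiable at $X_0$ with $D\hat f(X_0)\in\Lambda_2^{\mathbb{P}}(H,U)$; let $m(A)u:=D\hat f(X_0)(u\mathbf{1}_A)$ and $m_{\mu_0}(B):=m(\{X_0\in B\})$ for Borel $B\subset H$. Then $$\frac{dm_{\mu_0}}{d\mu_0}(x):=\sum_{k=1}^N\frac{m_{\mu_0}(\{x_k\})}{\mu_0(\{x_k\})}\mathbf{1}_{\{x_k\}}(x)$$ satisfies $\mathbb{E}\big[\mathbf{1}_A\frac{dm_{\mu_0}}{d\mu_0}(X_0)\big]=m(A)$ for all $A\in\mathcal{F}$ (Bochner integral in $L(H,U)$).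
   Context: $(\Omega,\mathcal{F},\mathbb{P})$ is a complete atomless probability space, $\Omega$ Polish with Borel $\sigma$-field; $H,U$ separable real Hilbert spaces; $L(H,U)$ with operator norm. For bounded linear $L:L^2(\Omega,H)\to U$, $|\!|\!|L|\!|\!|_{2,\mathbb{P}}:=\sup\{\sum_i\|L(\mathbf{1}_{A_i}x_i)\|_U:A_i\in\mathcal{F}$ pairwise disjoint, $x_i\in H$, $\mathbb{E}\|\sum_i\mathbf{1}_{A_i}x_i\|_H^2\le1\}$, and $\Lambda_2^{\mathbb{P}}(H,U)$ is the set of such $L$ with finite norm; for such $L$, $A\mapsto L(\cdot\,\mathbf{1}_A)$ is a vector measure $\mathcal{F}\to L(H,U)$. *)

(* Defs.v *)
From HB Require Import structures.
From mathcomp Require Import all_boot all_order all_algebra.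
From mathcomp Require Import all_classical all_reals all_analysis.
Set Implicit Arguments. Unset Strict Implicit. Unset Printing Implicit Defensive.
Import Order.TTheory GRing.Theory Num.Theory.
Import numFieldNormedType.Exports.
Local Open Scope classical_set_scope.
Local Open Scope ring_scope.

Section Defs.
Variable R : realType.

Definition is_inner_product (V : normedModType R) (ip : V -> V -> R) : Prop :=
  (forall x y, ip x y = ip y x) /\
  (forall (a : R) x y z, ip (a *: x + y) z = a * ip x z + ip y z) /\
  (forall x, ip x x = `|x| ^+ 2).

Definition separable_space (V : normedModType R) : Prop :=
  exists D : set V, countable D /\ closure D = setT.

Definition separable_hilbert (V : completeNormedModType R) : Prop :=
  (exists ip : V -> V -> R, is_inner_product ip) /\ separable_space V.

Definition is_metric (T : Type) (dist : T -> T -> R) : Prop :=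
  (forall x y, 0 <= dist x y) /\ (forall x y, dist x y = 0 <-> x = y) /\
  (forall x y, dist x y = dist y x) /\
  (forall x y z, dist x z <= dist x y + dist y z).

Definition metric_open (T : Type) (dist : T -> T -> R) (O : set T) : Prop :=
  forall x, O x -> exists e : R, 0 < e /\ forall y, dist x y < e -> O y.

Definition metric_complete (T : Type) (dist : T -> T -> R) : Prop :=
  forall u : nat -> T,
    (forall e : R, 0 < e -> exists N, forall n m, (N <= n)%N -> (N <= m)%N ->
        dist (u n) (u m) < e) ->
    exists l, forall e : R, 0 < e -> exists N, forall n, (N <= n)%N -> dist (u n) l < e.

Definition metric_separable (T : Type) (dist : T -> T -> R) : Prop :=
  exists D : set T, countable D /\
    forall x (e : R), 0 < e -> exists y, D y /\ dist x y < e.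

Definition metric_borel (T : Type) (dist : T -> T -> R) : set (set T) :=
  <<s [set O | metric_open dist O] >>.

(* (Omega, F, P): Omega Polish, F = P-completion of its Borel sigma-field,
   P complete and atomless *)
Definition polish_completed_borel d (T : measurableType d)
    (P : probability T R) : Prop :=
  exists dist : T -> T -> R,
    [/\ is_metric dist, metric_complete dist, metric_separable dist,
        (forall B, metric_borel dist B -> measurable B) &
        (forall A, measurable A -> exists B N,
            [/\ metric_borel dist B, metric_borel dist N, P N = 0%E &
                ((A `\` B) `|` (B `\` A)) `<=` N])].

Definition complete_prob d (T : measurableType d) (P : probability T R) : Prop :=
  forall N, measurable N -> P N = 0%E -> forall M, M `<=` N -> measurable M.

Definition atomless_prob d (T : measurableType d) (P : probability T R) : Prop :=
  forall A, measurable A -> (0 < P A)%E ->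
    exists B, [/\ measurable B, B `<=` A, (0 < P B)%E & (P B < P A)%E].

Definition borelH (V : normedModType R) : set (set V) :=
  <<s [set O : set V | open O] >>.

Definition measH d (T : measurableType d) (V : normedModType R) (X : T -> V) : Prop :=
  forall B : set V, borelH B -> measurable (X @^-1` B).

Definition inL2 d (T : measurableType d) (P : probability T R)
    (V : normedModType R) (X : T -> V) : Prop :=
  measH X /\ (\int[P]_w ((`|X w| ^+ 2)%:E) < +oo)%E.

Definition L2norm d (T : measurableType d) (P : probability T R)
    (V : normedModType R) (X : T -> V) : R :=
  Num.sqrt (fine (\int[P]_w ((`|X w| ^+ 2)%:E))).

(* law of X: the pushforward set function on Borel sets of H
   (set to 0 on non-Borel sets, which carry no information) *)
Definition lawH d (T : measurableType d) (P : probability T R)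
    (V : normedModType R) (X : T -> V) : set V -> \bar R :=
  fun B => if `[< borelH B >] then P (X @^-1` B) else 0%E.

Definition indv (T : Type) (V : normedModType R) (A : set T) (u : V) : T -> V :=
  fun w => if `[< A w >] then u else 0.

Definition is_frechet_derivative_L2 d (T : measurableType d) (P : probability T R)
    (V W : normedModType R) (F : (T -> V) -> W) (X0 : T -> V)
    (D : (T -> V) -> W) : Prop :=
  (forall (a : R) X Y, inL2 P X -> inL2 P Y ->
      D (fun w => a *: X w + Y w) = a *: D X + D Y) /\
  (exists C : R, forall Y, inL2 P Y -> `|D Y| <= C * L2norm P Y) /\
  (forall e : R, 0 < e -> exists del : R, 0 < del /\
     forall Y, inL2 P Y -> L2norm P Y < del ->
       `|F (fun w => X0 w + Y w) - F X0 - D Y| <= e * L2norm P Y).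

Definition Lambda2 d (T : measurableType d) (P : probability T R)
    (V W : normedModType R) (L : (T -> V) -> W) : Prop :=
  exists C : R, forall s : seq (set T * V),
    (forall i, (i < size s)%N -> measurable (nth (set0, 0) s i).1) ->
    (forall i j, (i < size s)%N -> (j < size s)%N -> i <> j ->
        (nth (set0, 0) s i).1 `&` (nth (set0, 0) s j).1 = set0) ->
    L2norm P (fun w => \sum_(p <- s) indv p.1 p.2 w) <= 1 ->
    \sum_(p <- s) `|L (indv p.1 p.2)| <= C.

Definition bounded_linear (V W : normedModType R) (c : V -> W) : Prop :=
  (forall (a : R) x y, c (a *: x + y) = a *: c x + c y) /\
  exists C : R, forall x, `|c x| <= C * `|x|.

Definition opnorm (V W : normedModType R) (c : V -> W) : R :=
  sup [set `|c u| | u in [set u : V | `|u| <= 1]].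

(* s is the simple function sum_i c_i 1_{B_i} (B_i in F, c_i in L(H,U))
   and v = sum_i P(B_i) c_i is its integral *)
Definition simple_op_integral d (T : measurableType d) (P : probability T R)
    (V W : normedModType R) (s : T -> V -> W) (v : V -> W) : Prop :=
  exists r : seq (set T * (V -> W)),
    [/\ (forall p, p \in r -> measurable p.1 /\ bounded_linear p.2),
        s = (fun w u => \sum_(p <- r) (if `[< p.1 w >] then p.2 u else 0)) &
        v = (fun u => \sum_(p <- r) fine (P p.1) *: p.2 u)].

Definition bochner_integral_op d (T : measurableType d) (P : probability T R)
    (V W : normedModType R) (h : T -> V -> W) (v : V -> W) : Prop :=
  bounded_linear v /\
  exists (s : nat -> T -> V -> W) (vs : nat -> V -> W),
    [/\ (forall n, simple_op_integral P (s n) (vs n)),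
        (forall e : R, 0 < e -> exists N, forall n, (N <= n)%N ->
           (\int[P]_w ((opnorm (fun u => s n w u - h w u))%:E) <= e%:E)%E) &
        (forall e : R, 0 < e -> exists N, forall n, (N <= n)%N ->
           opnorm (fun u => vs n u - v u) <= e)].

End Defs.

(* Main.v *)
Require Import Defs.
From HB Require Import structures.
From mathcomp Require Import all_boot all_order all_algebra.
From mathcomp Require Import all_classical all_reals all_analysis.
Import Order.TTheory GRing.Theory Num.Theory.
Import numFieldNormedType.Exports.
Local Open Scope classical_set_scope.
Local Open Scope ring_scope.
Set Implicit Arguments. Unset Strict Implicit. Unset Printing Implicit Defensive.

Section MuFacts.
Variables (R : realType) (d : measure_display) (T : measurableType d)
  (P : probability T R).

Definition mu (S : set T) : R := fine (P S).

Lemma PE S : measurable S -> P S = (mu S)%:E.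
Proof. by move=> mS; rewrite /mu fineK // fin_num_measure. Qed.

Lemma mu_ge0 S : 0 <= mu S.
Proof. exact/fine_ge0/measure_ge0. Qed.

Lemma mu_le1 S : measurable S -> mu S <= 1.
Proof. by move=> mS; rewrite -lee_fin -PE //; exact: probability_le1. Qed.

Lemma muT : mu setT = 1.
Proof. by rewrite /mu probability_setT. Qed.

Lemma mu_set0 : mu set0 = 0.
Proof. by rewrite /mu measure0. Qed.

Lemma muU A B : measurable A -> measurable B -> A `&` B = set0 ->
  mu (A `|` B) = mu A + mu B.
Proof.
move=> mA mB AB; apply: EFin_inj; rewrite -PE; last exact: measurableU.
by rewrite EFinD -!PE // measureU.
Qed.

Lemma mu_le A B : measurable A -> measurable B -> A `<=` B -> mu A <= mu B.
Proof. by move=> mA mB AB; rewrite -lee_fin -!PE //; by apply: le_measure => //; rewrite inE. Qed.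

Lemma muD A B : measurable A -> measurable B -> B `<=` A ->
  mu (A `\` B) = mu A - mu B.
Proof.
move=> mA mB BA; have -> : mu A = mu B + mu (A `\` B).
  rewrite -muU //; first by rewrite setDUK.
    exact: measurableD.
  by rewrite setDE setICA setICr setI0.
by rewrite addrC addKr.
Qed.

End MuFacts.

From mathcomp Require Import lra.

Section Sierp.
Variables (R : realType) (d : measure_display) (T : measurableType d)
  (P : probability T R).
Hypothesis Hat : atomless_prob P.

Local Notation mu := (mu P).

Lemma small_sub A : measurable A -> 0 < mu A -> forall n, exists B,
  [/\ measurable B, B `<=` A, 0 < mu B & mu B * 2 ^+ n <= mu A].
Proof.
move=> mA A0; elim=> [|n [B [mB BA B0 Bn]]].
  by exists A; split => //; rewrite expr0 mulr1.
have [B' [mB' B'B]] : exists B', [/\ measurable B', B' `<=` B,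
    0 < mu B' & mu B' < mu B].
  have [B' [mB' B'B]] := Hat mB (ltac:(by rewrite PE // lte_fin)).
  by rewrite !PE // !lte_fin => h1 h2; exists B'.
move=> B'0 B'B1.
have t0 : 0 <= (2:R) ^+ n by apply: exprn_ge0.
move: Bn; rewrite exprS; set t := 2 ^+ n => Bn.
have [h|h] := lerP (mu B' * 2) (mu B).
  exists B'; split => //; first exact: subset_trans B'B BA.
  by nra.
exists (B `\` B'); split.
- exact: measurableD.
- by move=> w [] /BA.
- by rewrite muD //; lra.
- by rewrite muD //; nra.
Qed.

Lemma small_sub' A e : measurable A -> 0 < mu A -> 0 < e -> exists B,
  [/\ measurable B, B `<=` A, 0 < mu B & mu B < e].
Proof.
move=> mA A0 e0.
have h0 : 0 <= mu A / e by apply: divr_ge0 => //; [exact: mu_ge0|exact: ltW].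
have := archi_boundP h0; set n := Num.Def.archi_bound _ => hn.
have [B [mB BA B0 Bn]] := small_sub mA A0 n.
exists B; split => //.
have h2 : (n%:R : R) < 2 ^+ n.
  by rewrite -natrX ltr_nat ltn_expl.
have h3 : mu A < e * 2 ^+ n.
  by rewrite -ltr_pdivrMl // mulrC; apply: lt_trans h2.
have t0 : 0 < (2:R) ^+ n by apply: exprn_gt0.
move: Bn h3; set t := 2 ^+ n => Bn h3.
by nra.
Qed.


Lemma sierp A c : measurable A -> 0 <= c -> c <= mu A ->
  exists B, [/\ measurable B, B `<=` A & mu B = c].
Proof.
move=> mA c0 cA.
pose inv B := [/\ measurable B, B `<=` A & mu B <= c].
pose good B C := [/\ measurable C, C `<=` A `\` B, mu B + mu C <= c &
  forall C', measurable C' -> C' `<=` A `\` B -> mu B + mu C' <= c ->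
    mu C' <= 2 * mu C].
have step : forall B, exists C, inv B -> good B C.
  move=> B; have [iB|niB] := pselect (inv B); last by exists set0.
  case: iB => mB BA Bc.
  pose E := [set mu C | C in [set C | [/\ measurable C, C `<=` A `\` B &
    mu B + mu C <= c]]].
  have E0 : E 0 by exists set0; [split => //; rewrite mu_set0 addr0 | exact: mu_set0].
  have hs : has_sup E.
    split; first by exists 0.
    by exists 1 => _ [C [mC _ _] <-]; exact: mu_le1.
  have [s0|s0] := ltrP 0 (sup E).
    have e0 : 0 < sup E / 2 by lra.
    have [_ [C [mC CAB CB] <-] hC] := sup_adherent e0 hs.
    exists C => _; split => // C' mC' C'AB C'B.
    have : E (mu C') by exists C'.
    move/(sup_upper_bound hs) => le; lra.
  exists set0 => _; split => //; first by rewrite mu_set0 addr0.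
  move=> C' mC' C'AB C'B.
  have : E (mu C') by exists C'.
  move/(sup_upper_bound hs) => le; rewrite mu_set0; lra.
have [F HF] := choice step.
pose Bs n := iter n (fun B => B `|` F B) set0.
have BsS n : Bs n.+1 = Bs n `|` F (Bs n) by [].
have inv_Bs n : inv (Bs n) /\ mu (Bs n) = \sum_(i < n) mu (F (Bs i)).
  elim: n => [|n [iB eq]].
    by split; [split; [exact: measurable0 | by [] | by rewrite /Bs /= mu_set0] | rewrite big_ord0 /Bs /= mu_set0].
  have [mC CAB BC _] := HF _ iB; case: iB => mB BA Bc.
  have dj : Bs n `&` F (Bs n) = set0.
    by apply/seteqP; split => // w [bw /CAB [_]].
  rewrite BsS muU // big_ord_recr /= -eq; split => //; split => //.
    exact: measurableU.
  by move=> w [/BA|/CAB[]].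
  by rewrite muU.
have mBs k : measurable (Bs k) by case: (inv_Bs k) => -[].
pose Binf := \bigcup_n Bs n.
have mBinf : measurable Binf by apply: bigcup_measurable => k _.
have BinfA : Binf `<=` A by move=> w [n _]; case: (inv_Bs n) => -[_ + _] _; apply.
have Bs_inc n k : Bs n `<=` Bs (n + k)%N.
  elim: k => [|k IH]; first by rewrite addn0.
  by rewrite addnS BsS => w /IH; left.
have homo : {homo Bs : n m / (n <= m)%N >-> (n <= m)%O}.
  by move=> n m nm; apply/subsetPset; rewrite -(subnKC nm).
have cv := nondecreasing_cvg_mu (mu:=P) mBs mBinf homo.
have Binfc : mu Binf <= c.
  rewrite -lee_fin -PE // -(cvg_lim _ cv) //.
  apply: lime_le; first by apply/cvg_ex; exists (P Binf).
  by apply: nearW => n /=; rewrite PE // lee_fin; case: (inv_Bs n) => -[].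
have BsBinf n : mu (Bs n) <= mu Binf.
  by apply: mu_le => //; exact: bigcup_sup.
exists Binf; split => //.
apply/eqP; rewrite eq_le Binfc /=; apply/negPn/negP; rewrite -ltNge => Bc.
pose G := A `\` Binf.
have mG : measurable G by exact: measurableD.
have G0 : 0 < mu G by rewrite /G muD //; lra.
have cB0 : 0 < c - mu Binf by lra.
have [C [mC CG C0 Cc]] := small_sub' mG G0 cB0.
have key n : mu C <= 2 * mu (F (Bs n)).
  have [_ _ _ h] := HF _ (inv_Bs n).1.
  apply: h => //.
    move=> w /CG [Aw nBw]; split => // bw; apply: nBw; exists n => //.
  by have := BsBinf n; lra.
have sum_le n : n%:R * mu C <= 2 * c.
  have : \sum_(i < n) mu C <= \sum_(i < n) 2 * mu (F (Bs i)).
    by apply: ler_sum => i _; exact: key.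
  rewrite sumr_const card_ord -mulr_sumr -(inv_Bs n).2 mulr_natl => h.
  by case: (inv_Bs n) => -[_ _ h2] _; lra.
have h0 : 0 <= 2 * c / mu C by apply: divr_ge0; lra.
have := archi_boundP h0; set n := Num.Def.archi_bound _ => hn.
have := sum_le n; rewrite -ler_pdivlMr // => h; lra.
Qed.

End Sierp.

Section Indv.
Variables (R : realType) (d : measure_display) (T : measurableType d)
  (P : probability T R) (V : normedModType R).

Lemma indvT (S : set T) (v : V) w : S w -> indv S v w = v.
Proof. by move=> Sw; rewrite /indv asboolT. Qed.

Lemma indvF (S : set T) (v : V) w : ~ S w -> indv S v w = 0.
Proof. by move=> Sw; rewrite /indv asboolF. Qed.

Lemma meas_piece (Y : T -> V) (S : set T) (B : set V) : measurable S ->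
  (forall w w', S w -> S w' -> Y w = Y w') -> measurable (S `&` Y @^-1` B).
Proof.
move=> mS cst; have [[w0 [Sw0 Bw0]]|nw] := pselect (exists w, S w /\ B (Y w)).
  suff -> : S `&` Y @^-1` B = S by [].
  apply/seteqP; split => w; first by case.
  by move=> Sw; split => //; rewrite /preimage /= (cst w w0).
suff -> : S `&` Y @^-1` B = set0 by exact: measurable0.
by apply/seteqP; split => // w [Sw Bw]; apply: nw; exists w.
Qed.

Lemma measH_pw (Y : T -> V) (S1 S2 S3 : set T) :
  measurable S1 -> measurable S2 -> measurable S3 ->
  (forall w, [\/ S1 w, S2 w | S3 w]) ->
  (forall w w', S1 w -> S1 w' -> Y w = Y w') ->
  (forall w w', S2 w -> S2 w' -> Y w = Y w') ->
  (forall w w', S3 w -> S3 w' -> Y w = Y w') -> measH Y.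
Proof.
move=> m1 m2 m3 cov c1 c2 c3 B _.
have -> : Y @^-1` B = (S1 `&` Y @^-1` B) `|` (S2 `&` Y @^-1` B)
    `|` (S3 `&` Y @^-1` B).
  apply/seteqP; split => w; last by move=> [[|]|] [].
  by move=> Bw; case: (cov w) => h; [left; left|left; right|right].
by apply: measurableU; [apply: measurableU|]; apply: meas_piece.
Qed.

Lemma measH_indv (S : set T) (v : V) : measurable S -> measH (indv S v).
Proof.
move=> mS; apply: (@measH_pw _ S (~` S) set0) => //.
- exact: measurableC.
- by move=> w; have [Sw|nSw] := pselect (S w); [apply: Or31|apply: Or32].
- by move=> w w' Sw Sw'; rewrite !indvT.
- by move=> w w' Sw Sw'; rewrite !indvF.
Qed.

Lemma int_indv (S : set T) (v : V) : measurable S ->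
  (\int[P]_w ((`|indv S v w| ^+ 2)%:E) = (`|v| ^+ 2 * mu P S)%:E)%E.
Proof.
move=> mS.
have -> : (fun w => (`|indv S v w| ^+ 2)%:E) =
    (fun w => (`|v| ^+ 2)%:E * (\1_S w)%:E)%E.
  apply/funext => w; rewrite indicE -EFinM.
  have [Sw|nSw] := pselect (S w).
    by rewrite indvT // mem_set // mulr1.
  by rewrite indvF // memNset // mulr0 normr0 expr0n.
rewrite ge0_integralZl_EFin //.
- rewrite integral_indic // setIT [RHS]EFinM /mu fineK //; exact: fin_num_measure.
- by apply/measurable_realfun.measurable_EFinP; exact: measurable_realfun.measurable_indic.
Qed.

Lemma inL2_of (Y : T -> V) (S : set T) (v : V) : measurable S -> measH Y ->
  (forall w, `|Y w| = `|indv S v w|) ->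
  inL2 P Y /\ L2norm P Y = Num.sqrt (`|v| ^+ 2 * mu P S).
Proof.
move=> mS mY hY; rewrite /inL2 /L2norm.
have -> : (fun w => (`|Y w| ^+ 2)%:E) = (fun w => (`|indv S v w| ^+ 2)%:E).
  by apply/funext => w; rewrite hY.
split; first by split => //; rewrite int_indv // ltry.
by rewrite int_indv.
Qed.

Lemma sqrt_le (v : V) (S : set T) : measurable S ->
  Num.sqrt (`|v| ^+ 2 * mu P S) <= `|v|.
Proof.
move=> mS; rewrite -[X in _ <= X](ger0_norm (normr_ge0 v)) -sqrtr_sqr.
apply: ler_wsqrtr; rewrite -{2}(mulr1 (`|v| ^+ 2)).
by apply: ler_wpM2l; [exact: sqr_ge0| exact: mu_le1].
Qed.

End Indv.

Section DFacts.
Variables (R : realType) (d : measure_display) (T : measurableType d)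
  (P : probability T R) (H U : normedModType R)
  (F : (T -> H) -> U) (X0 : T -> H) (D : (T -> H) -> U).
Hypothesis HF : is_frechet_derivative_L2 P F X0 D.

Lemma Dl a X Y : inL2 P X -> inL2 P Y ->
  D (fun w => a *: X w + Y w) = a *: D X + D Y.
Proof. by case: HF => h _; apply: h. Qed.

Lemma inL2_indv (S : set T) (v : H) : measurable S -> inL2 P (indv S v).
Proof. by move=> mS; case: (inL2_of P mS (measH_indv v mS) (fun w => erefl)). Qed.

Lemma inL2_0 : inL2 P (fun _ : T => (0 : H)).
Proof.
have -> : (fun _ : T => (0 : H)) = indv set0 0.
  by apply/funext => w; rewrite /indv; case: asboolP.
exact/inL2_indv/measurable0.
Qed.

Lemma D0 : D (fun _ => 0) = 0.
Proof.
have := Dl 1 inL2_0 inL2_0.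
have -> : (fun w : T => 1 *: (0 : H) + 0) = (fun _ => 0).
  by apply/funext => w; rewrite scaler0 addr0.
rewrite scale1r => h.
have := congr1 (fun z => z - D (fun _ => 0)) h.
by rewrite subrr addrK => ->.
Qed.

Lemma DZ a X : inL2 P X -> D (fun w => a *: X w) = a *: D X.
Proof.
move=> hX; have := Dl a hX inL2_0.
have -> : (fun w : T => a *: X w + 0) = (fun w => a *: X w).
  by apply/funext => w; rewrite addr0.
by rewrite D0 addr0.
Qed.

Lemma Dadd X Y : inL2 P X -> inL2 P Y ->
  D (fun w => X w + Y w) = D X + D Y.
Proof.
move=> hX hY; have := Dl 1 hX hY.
have -> : (fun w : T => 1 *: X w + Y w) = (fun w => X w + Y w).
  by apply/funext => w; rewrite scale1r.
by rewrite scale1r.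
Qed.

Lemma Dsub X Y : inL2 P X -> inL2 P Y ->
  D (fun w => X w - Y w) = D X - D Y.
Proof.
move=> hX hY; have := Dl (-1) hY hX.
have -> : (fun w : T => (-1) *: Y w + X w) = (fun w => X w - Y w).
  by apply/funext => w; rewrite scaleN1r addrC.
by rewrite scaleN1r addrC.
Qed.

Lemma Dindv_lin (S : set T) a (x y : H) : measurable S ->
  D (indv S (a *: x + y)) = a *: D (indv S x) + D (indv S y).
Proof.
move=> mS; rewrite -Dl; try exact: inL2_indv.
congr D; apply/funext => w; rewrite /indv; case: asboolP => //.
by rewrite scaler0 addr0.
Qed.

Lemma DindvU (S S' : set T) (v : H) : measurable S -> measurable S' ->
  S `&` S' = set0 ->
  D (indv (S `|` S') v) = D (indv S v) + D (indv S' v).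
Proof.
move=> mS mS' dj; rewrite -Dadd; try exact: inL2_indv.
congr D; apply/funext => w.
have [Sw|nSw] := pselect (S w).
  have nS'w : ~ S' w by move=> S'w; have : (S `&` S') w by [] ; rewrite dj.
  by rewrite /indv asboolT; [rewrite asboolT // asboolF // addr0|left].
have [S'w|nS'w] := pselect (S' w).
  by rewrite /indv asboolT; [rewrite asboolF // asboolT // add0r|right].
by rewrite /indv !asboolF ?addr0 // => -[].
Qed.

Lemma Dbound : exists K, 0 <= K /\ forall (S : set T) (v : H), measurable S ->
  `|D (indv S v)| <= K * Num.sqrt (`|v| ^+ 2 * mu P S).
Proof.
case: HF => _ [[C HC] _]; exists `|C|; split => // S v mS.
have [hi hL] := inL2_of P mS (measH_indv v mS) (fun w => erefl).
apply: le_trans (HC _ hi) _; rewrite hL.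
by apply: ler_wpM2r; [exact: sqrtr_ge0| exact: ler_norm].
Qed.

Lemma Dnull (S : set T) (v : H) : measurable S -> mu P S = 0 ->
  D (indv S v) = 0.
Proof.
move=> mS S0; have [K [K0 hK]] := Dbound.
have := hK S v mS; rewrite S0 mulr0 sqrtr0 mulr0.
by rewrite normr_le0 => /eqP.
Qed.

End DFacts.

Section Swap.
Variables (R : realType) (d : measure_display) (T : measurableType d)
  (P : probability T R) (H U : normedModType R)
  (f : (set H -> \bar R) -> U) (X0 : T -> H) (D : (T -> H) -> U).
Hypothesis HF : is_frechet_derivative_L2 P (fun X => f (lawH P X)) X0 D.
Hypothesis hX0 : measH X0.

Lemma meas_const_set (b : Prop) : measurable [set _ : T | b].
Proof.
have [hb|hb] := pselect b.
  suff -> : [set _ : T | b] = setT by exact: measurableT.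
  by apply/seteqP; split.
suff -> : [set _ : T | b] = set0 by exact: measurable0.
by apply/seteqP; split.
Qed.

Lemma Pconst (B : set T) (b : Prop) : measurable B ->
  P (B `&` [set _ | b]) = if `[< b >] then P B else 0%E.
Proof.
move=> mB; have [hb|hb] := pselect b.
  rewrite asboolT //; congr (P _); apply/seteqP; split => w; first by case.
  by move=> ?; split.
rewrite asboolF //; suff -> : B `&` [set _ | b] = set0 by rewrite measure0.
by apply/seteqP; split => // w [].
Qed.

Lemma pre_decomp (B B' : set T) (g : T -> H) (y1 y2 : H) (S : set H) :
  measurable B -> measurable B' -> B `&` B' = set0 -> borelH S ->
  (forall w, B w -> g w = y1) -> (forall w, B' w -> g w = y2) ->
  (forall w, ~ B w -> ~ B' w -> g w = X0 w) ->
  P (g @^-1` S) = (P (B `&` [set _ | S y1]) + P (B' `&` [set _ | S y2])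
     + P (~` (B `|` B') `&` X0 @^-1` S))%E.
Proof.
move=> mB mB' dj bS g1 g2 g3.
have -> : g @^-1` S = (B `&` [set _ | S y1]) `|` (B' `&` [set _ | S y2])
    `|` (~` (B `|` B') `&` X0 @^-1` S).
  apply/seteqP; split => w.
    move=> Sgw; have [Bw|nBw] := pselect (B w).
      by left; left; split => //; rewrite -(g1 w Bw).
    have [B'w|nB'w] := pselect (B' w).
      by left; right; split => //; rewrite -(g2 w B'w).
    right; split; first by case.
    by rewrite /preimage /= -g3.
  move=> [[[Bw Sy]|[B'w Sy]]|[nBB' Sw]].
  - by rewrite /preimage /= g1.
  - by rewrite /preimage /= g2.
  - by rewrite /preimage /= g3 // => h; apply: nBB'; by [left|right].
have m1 : measurable (B `&` [set _ | S y1]) by apply: measurableI => //; exact: meas_const_set.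
have m2 : measurable (B' `&` [set _ | S y2]) by apply: measurableI => //; exact: meas_const_set.
have m3 : measurable (~` (B `|` B') `&` X0 @^-1` S).
  by apply: measurableI; [apply/measurableC/measurableU|exact: hX0].
rewrite measureU //; last 2 first.
- exact: measurableU.
- apply/seteqP; split => // w [[[Bw _]|[B'w _]] [h _]]; apply: h; [left|right] => //.
rewrite measureU //.
apply/seteqP; split => // w [[Bw _] [B'w _]].
by have : (B `&` B') w by []; rewrite dj.
Qed.

Lemma swap (xk : H) (B B' : set T) (u : H) :
  measurable B -> measurable B' ->
  B `<=` X0 @^-1` [set xk] -> B' `<=` X0 @^-1` [set xk] ->
  B `&` B' = set0 -> mu P B = mu P B' ->
  D (indv B u) = D (indv B' u).
Proof.
move=> mB mB' BE B'E dj BB'.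
have nB' w : B w -> ~ B' w.
  by move=> Bw B'w; have : (B `&` B') w by []; rewrite dj.
pose Z := fun w => indv B u w - indv B' u w.
pose Y t := fun w => t *: Z w.
have ZB w : B w -> Z w = u by move=> Bw; rewrite /Z indvT // indvF ?subr0 //; exact: nB'.
have ZB' w : B' w -> Z w = - u.
  by move=> B'w; rewrite /Z indvF ?indvT ?sub0r // => /nB'; apply.
have Z0 w : ~ B w -> ~ B' w -> Z w = 0.
  by move=> h1 h2; rewrite /Z !indvF ?subr0.
have mY t : measH (Y t).
  apply: (@measH_pw _ _ _ _ _ B B' (~` (B `|` B'))) => //.
  - by apply/measurableC/measurableU.
  - move=> w; have [Bw|nBw] := pselect (B w); first exact: Or31.
    have [B'w|nB'w] := pselect (B' w); first exact: Or32.
    by apply: Or33 => -[].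
  - by move=> w w' h h'; rewrite /Y !ZB.
  - by move=> w w' h h'; rewrite /Y !ZB'.
  - move=> w w' h h'; have [? ?] : ~ B w /\ ~ B' w by split => ?; apply: h; [left|right].
    have [? ?] : ~ B w' /\ ~ B' w' by split => ?; apply: h'; [left|right].
    by rewrite /Y !Z0.
have mBB' : measurable (B `|` B') by exact: measurableU.
have nY t w : `|Y t w| = `|indv (B `|` B') (t *: u) w|.
  have [Bw|nBw] := pselect (B w).
    by rewrite /Y ZB // indvT //; left.
  have [B'w|nB'w] := pselect (B' w).
    by rewrite /Y ZB' // indvT ?scalerN ?normrN //; right.
  by rewrite /Y Z0 // indvF ?scaler0 // => -[].
have L2Y t := inL2_of P mBB' (mY t) (nY t).
have hB : inL2 P (indv B u) by exact: inL2_indv.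
have hB' : inL2 P (indv B' u) by exact: inL2_indv.
have hZ : inL2 P Z by rewrite /Z; have [h _] := L2Y 1;
  move: h; congr inL2; apply/funext => w; rewrite /Y scale1r.
set v := D (indv B u) - D (indv B' u).
have DY t : D (Y t) = t *: v by rewrite /Y (DZ HF) // /Z (Dsub HF).
have law t : lawH P (fun w => X0 w + Y t w) = lawH P (fun w => X0 w + Y (- t) w).
  apply/funext => S; rewrite /lawH; case: asboolP => // bS.
  have Ex w : B w -> X0 w = xk by move=> /BE.
  have Ex' w : B' w -> X0 w = xk by move=> /B'E.
  rewrite (@pre_decomp B B' (fun w => X0 w + Y t w) (xk + t *: u) (xk + t *: - u)) //; first last.
  - by move=> w h1 h2; rewrite /Y Z0 // scaler0 addr0.
  - by move=> w h; rewrite /Y ZB' // Ex'.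
  - by move=> w h; rewrite /Y ZB // Ex.
  rewrite (@pre_decomp B B' (fun w => X0 w + Y (- t) w) (xk + t *: - u) (xk + t *: u)) //; first last.
  - by move=> w h1 h2; rewrite /Y Z0 // scaler0 addr0.
  - by move=> w h; rewrite /Y /= ZB' // Ex' // (scaleNr t (- u)) scalerN opprK.
  - by move=> w h; rewrite /Y /= ZB // Ex // (scaleNr t u) (scalerN t u).
  rewrite !Pconst // (PE P mB) (PE P mB') BB'.
  by rewrite (addeC (if _ then _ else _)).
apply/eqP; rewrite -subr_eq0 -/v; apply/negPn/negP => nv.
have v0 : 0 < `|v| by rewrite normr_gt0.
pose e := `|v| / (2 * (`|u| + 1)).
have e0 : 0 < e by apply: divr_gt0 => //; apply: mulr_gt0 => //; apply: ltr_pwDr.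
have ee : e * (2 * (`|u| + 1)) = `|v|.
  by rewrite /e mulfVK // mulf_neq0 // lt0r_neq0 // ltr_pwDr.
case: HF => _ [_ Hfr].
have [del [del0 Hd]] := Hfr e e0.
pose t := del / (2 * (`|u| + 1)).
have t0 : 0 < t by apply: divr_gt0 => //; apply: mulr_gt0 => //; apply: ltr_pwDr.
have tt : t * (2 * (`|u| + 1)) = del.
  by rewrite /t mulfVK // mulf_neq0 // lt0r_neq0 // ltr_pwDr.
have Lle s : `|s| = t -> L2norm P (Y s) <= t * `|u|.
  move=> st; have [_ ->] := L2Y s.
  by apply: le_trans (sqrt_le _ _ mBB') _; rewrite normrZ st.
have Llt s : `|s| = t -> L2norm P (Y s) < del.
  move=> st; apply: le_lt_trans (Lle s st) _.
  have := normr_ge0 u; nra.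
have h1 := Hd (Y t) (L2Y t).1 (Llt t (gtr0_norm t0)).
have nt : `|- t| = t by rewrite normrN gtr0_norm.
have h2 := Hd (Y (- t)) (L2Y (- t)).1 (Llt (- t) nt).
have l1 := Lle t (gtr0_norm t0).
have l2 := Lle (- t) nt.
rewrite -law !DY in h1 h2.
set a := f _ in h1 h2; set b := f (lawH P X0) in h1 h2.
have : `|(a - b - (- t) *: v) - (a - b - t *: v)| <= e * L2norm P (Y t) + e * L2norm P (Y (- t)).
  by rewrite [X in _ <= X]addrC; apply: le_trans (ler_normB _ _) _; exact: lerD.
have -> : (a - b - (- t) *: v) - (a - b - t *: v) = (t + t) *: v.
  by rewrite scaleNr opprK opprB addrC addrA subrK scalerDl.
rewrite normrZ gtr0_norm; last by rewrite addr_gt0.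
move=> h.
have h3 : (t + t) * `|v| <= e * (t * `|u|) + e * (t * `|u|).
  apply: le_trans h _; apply: lerD; apply: ler_wpM2l => //; exact: ltW.
have := normr_ge0 u; nra.
Qed.

End Swap.

Section Lin.
Variables (R : realType) (d : measure_display) (T : measurableType d)
  (P : probability T R) (H U : normedModType R)
  (f : (set H -> \bar R) -> U) (X0 : T -> H) (D : (T -> H) -> U).
Hypothesis HF : is_frechet_derivative_L2 P (fun X => f (lawH P X)) X0 D.
Hypothesis hX0 : measH X0.
Hypothesis Hat : atomless_prob P.
Variables (xk : H) (u : H).
Hypothesis mE : measurable (X0 @^-1` [set xk]).
Hypothesis E0 : 0 < mu P (X0 @^-1` [set xk]).

Local Notation E := (X0 @^-1` [set xk]).
Local Notation mu := (mu P).

Let g S := D (indv S u) - (mu S / mu E) *: D (indv E u).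

Let dec (A B : set T) : A = (A `&` B) `|` (A `\` B).
Proof.
apply/seteqP; split => w; last by move=> [[]|[]].
by move=> Aw; have [Bw|nBw] := pselect (B w); [left|right].
Qed.

Let decI (A B : set T) : (A `&` B) `&` (A `\` B) = set0.
Proof. by apply/seteqP; split => // w [[_ ?] [_ ?]]. Qed.

Let gU A B : measurable A -> measurable B -> A `&` B = set0 ->
  g (A `|` B) = g A + g B.
Proof.
move=> mA mB dj; rewrite /g (DindvU HF) // muU // mulrDl scalerDl.
by rewrite opprD addrACA.
Qed.

Let gE : g E = 0.
Proof. by rewrite /g divff ?scale1r ?subrr // lt0r_neq0. Qed.

Let geq A B : measurable A -> measurable B -> A `<=` E -> B `<=` E ->
  mu A = mu B -> g A = g B.
Proof.
move=> mA mB AE BE AB.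
have m1 : measurable (A `&` B) by exact: measurableI.
have m2 : measurable (A `\` B) by exact: measurableD.
have m3 : measurable (B `\` A) by exact: measurableD.
have e1 : mu A = mu (A `&` B) + mu (A `\` B) by rewrite {1}(dec A B) muU // decI.
have e2 : mu B = mu (A `&` B) + mu (B `\` A).
  by rewrite {1}(dec B A) (setIC B A) muU // -(setIC B A) decI.
have sw : D (indv (A `\` B) u) = D (indv (B `\` A) u).
  apply: (swap HF hX0 (xk:=xk) (B:=A `\` B) (B':=B `\` A) u m2 m3).
  - by move=> w [/AE].
  - by move=> w [/BE].
  - by apply/seteqP; split => // w [[_ ?] [? _]].
  - lra.
have gA : g A = g (A `&` B) + g (A `\` B) by rewrite {1}(dec A B) gU // decI.
have gB : g B = g (A `&` B) + g (B `\` A).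
  rewrite {1}(dec B A) (setIC B A) gU //.
  by apply/seteqP; split => // w [[? _] [_ ?]].
rewrite gA gB.
congr (_ + _); rewrite /g sw; congr (_ - (_ / _) *: _); lra.
Qed.

Let Kb : exists K M, [/\ 0 <= K, 0 <= M & forall A, measurable A ->
  `|g A| <= K * Num.sqrt (mu A) + mu A * M].
Proof.
have [K0 [K00 hK]] := Dbound HF.
exists (K0 * `|u|), (`|D (indv E u)| / mu E); split.
- exact: mulr_ge0.
- by apply: divr_ge0 => //; exact: ltW.
move=> A mA; apply: le_trans (ler_normB _ _) _; apply: lerD.
  apply: le_trans (hK A u mA) _.
  by rewrite sqrtrM ?sqr_ge0 // sqrtr_sqr normr_id mulrA.
rewrite normrZ ger0_norm; last by apply: divr_ge0; [exact: mu_ge0|exact: ltW].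
by rewrite mulrAC mulrA.
Qed.

Lemma lin (S : set T) : measurable S -> S `<=` E ->
  D (indv S u) = (mu S / mu E) *: D (indv E u).
Proof.
move=> mS SE; apply/eqP; rewrite -subr_eq0; apply/eqP; rewrite -/(g S).
have [K [M [K0 M0 hKM]]] := Kb.
have main n : (0 < n)%N -> `|g S| <= K * Num.sqrt (mu E / n%:R) + mu E / n%:R * M.
  move=> n0; set q := mu E / n%:R.
  have n0' : (0 : R) < n%:R by rewrite ltr0n.
  have q0 : 0 < q by apply: divr_gt0.
  have qE : q * n%:R = mu E by rewrite /q mulfVK // lt0r_neq0.
  have qle : q <= mu E.
    have : (1 : R) <= n%:R by rewrite ler1n.
    by nra.
  have [Q [mQ QE muQ]] := sierp Hat mE (ltW q0) qle.
  have gj j A : measurable A -> A `<=` E -> mu A = j%:R * q -> g A = g Q *+ j.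
    elim: j A => [|j IH] A mA AE muA.
      by rewrite mulr0n /g (Dnull HF) // ?muA mul0r // mul0r scale0r subr0.
    have hq : q <= mu A by rewrite muA -natr1 mulrDl mul1r; have := ler0n R j; nra.
    have [A1 [mA1 A1A muA1]] := sierp Hat mA (ltW q0) hq.
    have mA2 : measurable (A `\` A1) by exact: measurableD.
    rewrite -(setDUK A1A) gU //; last first.
      by apply/seteqP; split => // w [? [_ ?]].
    rewrite (geq mA1 mQ) ?muQ //; last by move=> w /A1A /AE.
    rewrite (IH (A `\` A1)) //; first by rewrite mulrS.
      by move=> w [/AE].
    by rewrite muD // muA muA1 -natr1 mulrDl mul1r addrK.
  have gQ : g Q = 0.
    have nE : mu E = n%:R * q by rewrite mulrC qE.
    have := gj n E mE (fun w h => h) nE.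
    rewrite gE => /esym/eqP; rewrite -scaler_nat scaler_eq0 pnatr_eq0.
    by rewrite eqn0Ngt n0 /= => /eqP.
  have b0 : 0 <= mu S / q by apply: divr_ge0; [exact: mu_ge0|exact: ltW].
  have /andP[t1 t2] := truncn_itv b0.
  set j := Num.truncn _ in t1 t2.
  have jq : j%:R * q <= mu S by rewrite -ler_pdivlMr.
  have jq2 : mu S < j%:R * q + q.
    by move: t2; rewrite ltr_pdivrMr // -natr1 mulrDl mul1r.
  have [S1 [mS1 S1S muS1]] := sierp Hat mS (mulr_ge0 (ler0n _ _) (ltW q0)) jq.
  have mS2 : measurable (S `\` S1) by exact: measurableD.
  rewrite -(setDUK S1S) gU //; last by apply/seteqP; split => // w [? [_ ?]].
  rewrite (gj j S1) //; last by move=> w /S1S /SE.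
  rewrite gQ mul0rn add0r.
  apply: le_trans (hKM _ mS2) _.
  have m2 : mu (S `\` S1) <= q by rewrite muD // muS1; lra.
  apply: lerD; last by apply: ler_wpM2r.
  by apply: ler_wpM2l => //; rewrite ler_sqrt //; exact: ltW.
set x := `|g S|.
apply/normr0_eq0/eqP; rewrite eq_le normr_ge0 andbT -/x; apply/negP => /negP.
rewrite -ltNge => x0.
pose d1 := x / (2 * (K + 1)).
pose d2 := x / (2 * (M + 1)).
have d10 : 0 < d1 by apply: divr_gt0 => //; apply: mulr_gt0 => //; lra.
have d20 : 0 < d2 by apply: divr_gt0 => //; apply: mulr_gt0 => //; lra.
have d1e : d1 * (2 * (K + 1)) = x by rewrite /d1 mulfVK // mulf_neq0 //; lra.
have d2e : d2 * (2 * (M + 1)) = x by rewrite /d2 mulfVK // mulf_neq0 //; lra.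
pose del := Num.min (d1 ^+ 2) d2.
have del0 : 0 < del by rewrite lt_min exprn_gt0 // d20.
have del1 : del <= d1 ^+ 2 by rewrite ge_min lexx.
have del2 : del <= d2 by rewrite ge_min lexx orbT.
have h0 : 0 <= mu E / del by apply: divr_ge0; [exact: mu_ge0|exact: ltW].
have := archi_boundP h0; set n := Num.Def.archi_bound _ => hn.
have n0' : (0 : R) < n%:R by apply: le_lt_trans hn.
have n0 : (0 < n)%N by rewrite -(ltr0n R).
have := main n n0; set q := mu E / n%:R => hq.
have qd : q < del by rewrite /q ltr_pdivrMr // mulrC -ltr_pdivrMr.
have sq : Num.sqrt q <= d1.
  rewrite -(ger0_norm (ltW d10)) -sqrtr_sqr ler_sqrt; last exact: sqr_ge0.
  lra.
have q0 : 0 <= q by apply: divr_ge0; [exact: mu_ge0|exact: ltW].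
have s0 := sqrtr_ge0 q.
have : K * Num.sqrt q <= K * d1 by apply: ler_wpM2l.
have : q * M <= d2 * M by apply: ler_wpM2r => //; lra.
rewrite -/x in hq => h1 h2.
have : K * d1 + d2 * M < x by nra.
lra.
Qed.

End Lin.

Lemma borel_set1 (R : realType) (V : normedModType R) (y : V) : borelH [set y].
Proof.
rewrite /borelH -[[set y]]setCK; apply: sigma_algebraC; apply: sub_sigma_algebra.
apply: closed_openC; apply: accessible_closed_set1; apply: hausdorff_accessible.
exact: norm_hausdorff.
Qed.

Lemma bl_scale (R : realType) (V W : normedModType R) (g : V -> W) (a : R) :
  bounded_linear g -> bounded_linear (fun u => a *: g u).
Proof.
case=> hl [C hC]; split.
  by move=> b x y; rewrite hl scalerDr !scalerA mulrC.
exists (`|a| * C) => x; rewrite normrZ -mulrA; apply: ler_wpM2l => //.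
Qed.

Lemma bl_D (R : realType) (d : measure_display) (T : measurableType d)
  (P : probability T R) (H U : normedModType R)
  (F : (T -> H) -> U) (X0 : T -> H) (D : (T -> H) -> U) (S : set T) :
  is_frechet_derivative_L2 P F X0 D -> measurable S ->
  bounded_linear (fun u => D (indv S u)).
Proof.
move=> HF mS; split; first by move=> a x y; exact: (Dindv_lin HF).
have [K [K0 hK]] := Dbound HF.
exists K => x; apply: le_trans (hK S x mS) _.
by apply: ler_wpM2l => //; exact: sqrt_le.
Qed.

Lemma opnorm0 (R : realType) (V W : normedModType R) :
  opnorm (fun _ : V => (0 : W)) = 0.
Proof.
rewrite /opnorm normr0.
have -> : [set (0 : R) | u in [set u : V | `|u| <= 1]] = [set 0].
  apply/seteqP; split => [r [u _ <-]|r ->] //.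
  by exists (0 : V) => //=; rewrite normr0.
exact: sup1.
Qed.

Lemma setIDU (T : Type) (A B : set T) : A = (A `&` B) `|` (A `\` B).
Proof.
apply/seteqP; split => w; last by move=> [[]|[]].
by move=> Aw; have [Bw|nBw] := pselect (B w); [left|right].
Qed.

Unset Implicit Arguments.

Theorem lemma3p4 (R : realType) (d : measure_display) (T : measurableType d)
  (P : probability T R) (H U : completeNormedModType R)
  (f : (set H -> \bar R) -> U) (X0 : T -> H)
  (N : nat) (x : 'I_N -> H) (p : 'I_N -> R)
  (D : (T -> H) -> U) :
  polish_completed_borel P -> complete_prob P -> atomless_prob P ->
  separable_hilbert H -> separable_hilbert U ->
  inL2 P X0 ->
  injective x -> (forall k, 0 < p k) -> \sum_(k < N) p k = 1 ->
  (forall B, borelH B ->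
     lawH P X0 B = (\sum_(k < N) (p k * (x k \in B)%:R))%:E) ->
  is_frechet_derivative_L2 P (fun X => f (lawH P X)) X0 D ->
  Lambda2 P D ->
  let m := fun (A : set T) (u : H) => D (indv A u) in
  let m_mu0 := fun (B : set H) => m (X0 @^-1` B) in
  let mu0 := lawH P X0 in
  let dm_dmu0 := fun (y : H) (u : H) =>
     \sum_(k < N) ((fine (mu0 [set x k]))^-1 *: m_mu0 [set x k] u)
                   *+ (y == x k) in
  forall A : set T, measurable A ->
    bochner_integral_op P
      (fun w u => if `[< A w >] then dm_dmu0 (X0 w) u else 0) (m A).
Proof.
move=> hpol hcomp Hat hH hU hX0L2 xinj p0 psum hlaw HF HL m m_mu0 mu0 dm A mA.
have hX0 : measH X0 := hX0L2.1.
pose E k := X0 @^-1` [set x k].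
have mE k : measurable (E k) by apply: hX0; exact: borel_set1.
have PEk k : P (E k) = (p k)%:E.
  have := hlaw _ (borel_set1 (x k)); rewrite /lawH asboolT; last exact: borel_set1.
  move=> ->; congr (_%:E).
  rewrite (bigD1 k) //= big1 ?addr0; first by rewrite mem_set // mulr1.
  move=> j /negP jk; rewrite memNset ?mulr0 // => h; apply: jk; apply/eqP.
  exact: xinj _ _ h.
have muE k : mu P (E k) = p k by rewrite /mu PEk.
have mu0E k : fine (mu0 [set x k]) = p k.
  by rewrite /mu0 /lawH asboolT ?PEk //; exact: borel_set1.
have linE k S : measurable S -> S `<=` E k -> forall u,
    D (indv S u) = (mu P S / p k) *: D (indv (E k) u).
  move=> mS SE u; rewrite -muE; apply: (lin HF hX0 Hat) => //.
  - exact: mE.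
  - by have := muE k; rewrite /E => ->; exact: p0.
pose Us (s : seq 'I_N) := [set w | has (fun k => X0 w == x k) s].
have Us_prop s : uniq s -> [/\ measurable (Us s),
    mu P (Us s) = \sum_(k <- s) p k &
    forall u, D (indv (A `&` Us s) u) = \sum_(k <- s) D (indv (A `&` E k) u)].
  elim: s => [|k s IH] /=.
    have -> : Us [::] = set0 by apply/seteqP; split.
    move=> _; split; first exact: measurable0.
      by rewrite big_nil mu_set0.
    by move=> u; rewrite setI0 big_nil (Dnull HF) ?mu_set0.
  move=> /andP [ks us]; have [mU muU' DU] := IH us.
  have UsE : Us (k :: s) = E k `|` Us s.
    apply/seteqP; split => w.
      by rewrite /Us /= => /orP [/eqP h|h]; [left|right].
    by case=> [h|h]; rewrite /Us /=; apply/orP; [left; apply/eqP|right].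
  have dj : E k `&` Us s = set0.
    apply/seteqP; split => // w [Ew /hasP [j js /eqP Xj]].
    rewrite Ew in Xj; have kj := xinj _ _ Xj.
    by move: ks; rewrite kj js.
  split.
  - by rewrite UsE; exact: measurableU.
  - by rewrite UsE muU // big_cons muE muU'.
  - move=> u; rewrite UsE setIUr (DindvU HF) ?big_cons ?DU //.
    + exact: measurableI.
    + exact: measurableI.
    + apply/seteqP; split => // w [[_ h1] [_ h2]].
      by have : (E k `&` Us s) w by []; rewrite dj.
have [mUall muUall DUall] := Us_prop (index_enum 'I_N) (index_enum_uniq _).
set Uall := Us (index_enum 'I_N) in mUall muUall DUall.
have muU1 : mu P Uall = 1 by rewrite muUall.
have DA u : D (indv A u) = \sum_(k <- index_enum 'I_N) D (indv (A `&` E k) u).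
  rewrite {1}(setIDU A Uall) (DindvU HF); last 3 first.
  - exact: measurableI.
  - exact: measurableD.
  - by apply/seteqP; split => // w [[_ h1] [_ h2]].
  rewrite DUall (Dnull HF) ?addr0 //; first exact: measurableD.
  have h1 : mu P (A `\` Uall) <= mu P (setT `\` Uall).
    apply: mu_le; [exact: measurableD|exact: measurableD|].
    by move=> w [_ ?].
  rewrite [X in _ <= X]muD // muT muU1 subrr in h1.
  by have := mu_ge0 P (A `\` Uall); lra.
rewrite /bochner_integral_op; split; first exact: (bl_D HF mA).
pose c k := fun u => (fine (mu0 [set x k]))^-1 *: m_mu0 [set x k] u.
exists (fun _ => fun w u => if `[< A w >] then dm (X0 w) u else 0).
exists (fun _ => m A); split.
- move=> _; exists [seq (A `&` E k, c k) | k <- index_enum 'I_N]; split.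
  + move=> q /mapP [k _ ->] /=; split; first exact: measurableI.
    exact: bl_scale (bl_D HF (mE k)).
  + apply/funext => w; apply/funext => u; rewrite big_map.
    case: (asboolP (A w)) => Aw.
      rewrite /dm; apply: eq_bigr => k _ /=.
      case: eqP => h.
        by rewrite asboolT ?mulr1n.
      by rewrite asboolF ?mulr0n // => -[].
    by rewrite big1 // => k _; rewrite asboolF // => -[].
  + apply/funext => u; rewrite big_map /= /m DA; apply: eq_bigr => k _.
    rewrite /c /m_mu0 /m mu0E (linE k) //; first by rewrite scalerA.
    exact: measurableI.
- move=> e e0; exists 0%N => n _.
  rewrite integral0_eq ?lee_fin ?(ltW e0) // => w _.
  rewrite (_ : (fun u => _) = (fun _ => 0)) ?opnorm0 //.
  by apply/funext => u; exact: subrr.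
- move=> e e0; exists 0%N => n _.
  rewrite (_ : (fun u => _) = (fun _ => 0)) ?opnorm0 ?(ltW e0) //.
  by apply/funext => u; exact: subrr.
Qed.
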